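(* Let $\mathcal{A}$ be a set of $N$ arms and $1\le B\le N$. In the full feedback setting, any randomized algorithm that selects $B$ arms per round has worst-case expected regret \[R_T^*\ge\Omega\left(\left(\tfrac14\right)^B(\log_2(N)-\log_2(B))\right)\quad\text{for }T\ge\Omega(\log_2(N)-\log_2(B)).\]
   Context: In each round $t=1,\dots,T$ an oblivious adversary fixes $c_t:\mathcal{A}\to[0,1]$; the algorithm picks $S_t\subset\mathcal{A}$ with $|S_t|=B$ and incurs cost $c_t(S_t):=\min_{a\in S_t}c_t(a)$; then $c_t$ is revealed (full feedback). $R_T^*(\mathbf{ALG}):=\max_{c_1,\dots,c_T}\mathbb{E}\left[\sum_{t=1}^T c_t(S_t)-\min_{a^*\in\mathcal{A}}\sum_{t=1}^T c_t(a^* )\right]$, expectation over the algorithm's randomness. *)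

(* Defs.v *)
From mathcomp Require Import all_boot all_order all_algebra.
From mathcomp Require Import reals exp.
Set Implicit Arguments. Unset Strict Implicit. Unset Printing Implicit Defensive.
Import Order.TTheory GRing.Theory Num.Theory.
Local Open Scope ring_scope.

Section Bandit.
Variables (R : realType) (N : nat).

Definition cost := {ffun 'I_N -> R}.

Definition valid_costs (c : nat -> cost) : Prop :=
  forall t a, 0 <= c t a <= 1.

(* c_t(S) = min_{a in S} c_t(a); the default 1 is harmless since costs are
   <= 1 and the chosen sets are nonempty (B >= 1). *)
Definition set_cost (c : cost) (S : {set 'I_N}) : R :=
  \big[Order.min/1]_(a in S) c a.

(* A randomized full-feedback algorithm, described by the (marginal)
   distribution of S_t given the revealed history c_1..c_{t-1}. *)
Definition algorithm := seq cost -> {ffun {set 'I_N} -> R}.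

Definition valid_alg (B : nat) (alg : algorithm) : Prop :=
  forall h : seq cost,
    (forall S, 0 <= alg h S) /\ \sum_(S : {set 'I_N}) alg h S = 1 /\
    (forall S, alg h S != 0 -> #|S| = B).

Definition expected_cost (alg : algorithm) (c : nat -> cost) (T : nat) : R :=
  \sum_(t < T) \sum_(S : {set 'I_N}) alg (mkseq c t) S * set_cost (c t) S.

Definition regret_vs (alg : algorithm) (c : nat -> cost) (T : nat) (a : 'I_N) : R :=
  expected_cost alg c T - \sum_(t < T) c t a.

(* r <= R_T^*(alg) = sup_c max_a regret_vs alg c T a *)
Definition worst_regret_ge (alg : algorithm) (T : nat) (r : R) : Prop :=
  forall eps : R, 0 < eps ->
    exists c : nat -> cost, valid_costs c /\
      exists a : 'I_N, r - eps < regret_vs alg c T a.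

End Bandit.

Definition log2 {R : realType} (x : R) : R := ln x / ln 2.

(* Main.v *)
Require Import Defs.
From mathcomp Require Import all_boot all_order all_algebra.
From mathcomp Require Import reals exp.
From mathcomp Require Import zify ring lra.
Import Order.TTheory GRing.Theory Num.Theory.
Local Open Scope ring_scope.

Section Adv.
Variables (R : realType) (N B k : nat) (alg : algorithm R N).

Definition ww (t : nat) : nat := (B.+1 ^ (k - t.+1))%N.
Definition inI (lo t i : nat) (a : nat) : bool :=
  (lo + i * ww t <= a < lo + i.+1 * ww t)%N.
Definition missind (lo t i : nat) (S : {set 'I_N}) : R :=
  if [forall a in S, ~~ inI lo t i a] then 1 else 0.
Definition missp (h : seq (cost R N)) lo t (i : 'I_B.+1) : R :=
  \sum_(S : {set 'I_N}) alg h S * missind lo t i S.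
Definition pickI h lo t : 'I_B.+1 := [arg max_(i > ord0) missp h lo t i]%O.
Definition ccost h lo t : cost R N :=
  [ffun a : 'I_N => if (t < k)%N then
     (if inI lo t (pickI h lo t) a then 0 else 1) else 0].
Definition newlo h lo t : nat :=
  if (t < k)%N then (lo + pickI h lo t * ww t)%N else lo.
Fixpoint gen (t : nat) : seq (cost R N) * nat :=
  match t with
  | 0 => ([::], 0%N)
  | t'.+1 => let p := gen t' in
      (rcons p.1 (ccost p.1 p.2 t'), newlo p.1 p.2 t')
  end.
Definition cc t := ccost (gen t).1 (gen t).2 t.
Definition lo t := (gen t).2.

Lemma gen1 t : (gen t).1 = mkseq cc t.
Proof. elim: t => [//|t IH]; by rewrite mkseqS -IH. Qed.

Lemma lo_inv t s : (t <= s <= k)%N ->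
  (lo t <= lo s)%N /\ (lo s + B.+1 ^ (k - s) <= lo t + B.+1 ^ (k - t))%N.
Proof.
move=> /andP[]; elim: s => [|s IH].
  by rewrite leqn0 => /eqP -> _.
rewrite leq_eqVlt => /orP[/eqP <- //|]; rewrite ltnS => ts sk.
have [IH1 IH2] := IH ts (ltnW sk).
have -> : lo s.+1 = (lo s + pickI (gen s).1 (lo s) s * ww s)%N.
  by rewrite /lo /= /newlo sk.
have hi : (pickI (gen s).1 (lo s) s < B.+1)%N by [].
have e : (B.+1 ^ (k - s) = B.+1 * ww s)%N by rewrite /ww -expnS; congr (_ ^ _)%N; lia.
have e2 : (B.+1 ^ (k - s.+1) = ww s)%N by [].
rewrite e in IH2; rewrite e2.
set i := nat_of_ord _ in hi *.
have : (i * ww s + ww s <= B.+1 * ww s)%N.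
  by rewrite -mulSnr leq_mul2r hi orbT.
split; lia.
Qed.

Lemma lo_k_lt : (B.+1 ^ k <= N)%N -> (lo k < N)%N.
Proof.
move=> h; have [_ h2] := lo_inv 0 k ltac:(by rewrite leq0n leqnn).
rewrite subnn expn0 subn0 in h2.
have l0 : lo 0 = 0%N by []. rewrite l0 in h2. lia.
Qed.

Lemma lo_in t : (t < k)%N -> inI (lo t) t (pickI (gen t).1 (lo t) t) (lo k).
Proof.
move=> tk; have [h1 h2] := lo_inv t.+1 k ltac:(by rewrite tk leqnn).
rewrite subnn expn0 in h2.
have E : lo t.+1 = (lo t + pickI (gen t).1 (lo t) t * ww t)%N.
  by rewrite /lo /= /newlo tk.
have e2 : (B.+1 ^ (k - t.+1) = ww t)%N by [].
rewrite E e2 in h2; rewrite E in h1; rewrite /inI mulSn; lia.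
Qed.

Lemma exists_miss lo0 t (S : {set 'I_N}) : #|S| = B ->
  [exists i : 'I_B.+1, [forall a in S, ~~ inI lo0 t i a]].
Proof.
move=> cS; case: existsP => // H0; exfalso.
have H : forall i : 'I_B.+1, ~~ [forall a in S, ~~ inI lo0 t i a].
  by move=> i; apply/negP => Hi; apply: H0; exists i.
have hw : (0 < ww t)%N by rewrite /ww expn_gt0.
pose f (a : 'I_N) : 'I_B.+1 := inord ((a - lo0) %/ ww t).
have sub : [set: 'I_B.+1] \subset f @: S.
  apply/subsetP => i _; move: (H i); rewrite negb_forall_in => /existsP[a /andP[aS]].
  rewrite negbK /inI => hin; apply/imsetP; exists a => //.
  have q : ((a - lo0) %/ ww t = i)%N.
    have -> : (a - lo0 = i * ww t + (a - lo0 - i * ww t))%N by lia.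
    rewrite divnMDl // divn_small ?addn0 //.
    rewrite mulSn in hin; lia.
  by apply/val_inj; rewrite /f /= q inordK.
have := subset_leq_card sub; rewrite cardsT card_ord.
have := leq_imset_card f S; rewrite cS => h1 h2.
by have := leq_trans h2 h1; rewrite ltnn.
Qed.

Lemma set_cost_ge0 (c : cost R N) S : (forall a, 0 <= c a) -> 0 <= set_cost c S.
Proof.
move=> h; rewrite /set_cost; elim/big_ind: _ => //.
by move=> x y hx hy; rewrite le_min hx hy.
Qed.

Lemma set_cost_1 (c : cost R N) (S : {set 'I_N}) :
  (forall a, a \in S -> c a = 1) -> set_cost c S = 1.
Proof.
move=> h; rewrite /set_cost; elim/big_rec: _ => // a x aS ->.
by rewrite h // minxx.
Qed.

Lemma cc_ge0 t a : 0 <= cc t a.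
Proof. by rewrite /cc /ccost ffunE; case: ifP => _ //; case: ifP. Qed.

Lemma cc_valid : valid_costs cc.
Proof.
move=> t a; rewrite /cc /ccost ffunE.
by case: ifP => _; [case: ifP => _|]; rewrite ?lexx ?ler01.
Qed.

Lemma missind_ge0 lo0 t i S : 0 <= missind lo0 t i S.
Proof. by rewrite /missind; case: ifP. Qed.

Lemma miss_le_cost t S : (t < k)%N ->
  missind (lo t) t (pickI (gen t).1 (lo t) t) S <= set_cost (cc t) S.
Proof.
move=> tk; rewrite /missind; case: ifP => H; last first.
  by apply: set_cost_ge0 => a; apply: cc_ge0.
rewrite set_cost_1 // => a aS; rewrite /cc /ccost ffunE tk.
by move/forall_inP: H => /(_ a aS) /negbTE ->.
Qed.

Lemma missp_sum (vA : valid_alg B alg) h lo0 t :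
  1 <= \sum_(i : 'I_B.+1) missp h lo0 t i.
Proof.
have [pos [sum1 card]] := vA h.
rewrite /missp exchange_big /= -sum1; apply: ler_sum => S _.
rewrite -mulr_sumr; have [->|nz] := eqVneq (alg h S) 0; first by rewrite mul0r.
rewrite -{1}[alg h S]mulr1 ler_wpM2l //.
have /existsP[i Hi] := exists_miss lo0 t S (card S nz).
rewrite (bigD1 i) //= {1}/missind Hi lerDl.
by apply: sumr_ge0 => j _; apply: missind_ge0.
Qed.

Lemma pick_bound (vA : valid_alg B alg) h lo0 t :
  1 <= B.+1%:R * missp h lo0 t (pickI h lo0 t).
Proof.
apply: le_trans (missp_sum vA h lo0 t) _.
have -> : B.+1%:R * missp h lo0 t (pickI h lo0 t) =
   \sum_(i : 'I_B.+1) missp h lo0 t (pickI h lo0 t).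
  by rewrite sumr_const card_ord mulr_natl.
apply: ler_sum => i _; rewrite /pickI.
by case: arg_maxP => //= j _ Hj; apply: Hj.
Qed.

Lemma round_bound (vA : valid_alg B alg) t : (t < k)%N ->
  1 / B.+1%:R <= \sum_(S : {set 'I_N}) alg (mkseq cc t) S * set_cost (cc t) S.
Proof.
move=> tk; have [pos _] := vA (mkseq cc t).
apply: le_trans (_ : missp (gen t).1 (lo t) t (pickI (gen t).1 (lo t) t) <= _).
  rewrite ler_pdivrMr ?ltr0Sn // mulrC.
  exact: pick_bound.
rewrite /missp gen1; apply: ler_sum => S _; apply: ler_wpM2l => //.
by rewrite -gen1; apply: miss_le_cost.
Qed.

Lemma cc_astar t (a : 'I_N) : val a = lo k -> cc t a = 0.
Proof.
move=> ha; rewrite /cc /ccost ffunE; case: ifP => // tk.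
by rewrite ha lo_in.
Qed.

Lemma regret_bound (vA : valid_alg B alg) (a : 'I_N) : val a = lo k ->
  forall T, (minn T k)%:R / B.+1%:R <= regret_vs alg cc T a.
Proof.
move=> ha T; rewrite /regret_vs /expected_cost -sumrB.
elim: T => [|T IH]; first by rewrite big_ord0 minnE subnn mul0r.
rewrite big_ord_recr /= cc_astar // subr0.
case: (ltnP T k) => Tk.
  have -> : minn T.+1 k = (minn T k).+1 by rewrite !minnE; lia.
  rewrite -addn1 natrD mulrDl mul1r; apply: lerD => //.
  by rewrite -[_^-1]mul1r; apply: round_bound.
have -> : minn T.+1 k = minn T k by rewrite !minnE; lia.
rewrite -[X in X <= _]addr0; apply: lerD => //.
apply: sumr_ge0 => S _; apply: mulr_ge0; first by have [p _] := vA (mkseq cc T).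
by apply: set_cost_ge0 => b; apply: cc_ge0.
Qed.

End Adv.

Lemma pow4 (B : nat) : (B * B.+1 <= 4 ^ B)%N.
Proof.
have h1 : (B < 2 ^ B)%N by apply: ltn_expl.
have -> : (4 ^ B = 2 ^ B * 2 ^ B)%N by rewrite -expnMn.
by apply: leq_mul => //; apply: ltnW.
Qed.

Lemma real_part (R : realType) (B T k : nat) (D : R) : (1 <= B)%N ->
  D <= T%:R -> D <= 2 * B%:R * k%:R ->
  (1 / 4) ^+ B * D / 2 <= (minn T k)%:R / B.+1%:R.
Proof.
move=> hB hT hk.
have hm : D <= 2 * B%:R * (minn T k)%:R.
  rewrite minnE; case: (leqP k T) => h.
    by have -> : (T - (T - k) = k)%N by lia.
  have -> : (T - (T - k) = T)%N by lia.
  apply: le_trans hT _; rewrite -[X in X <= _]mul1r ler_wpM2r //.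
  have : 1 <= B%:R :> R by rewrite ler1n.
  lra.
have h4 : B%:R * B.+1%:R <= (4 : R) ^+ B.
  by have := pow4 B; rewrite -(ler_nat R) natrM natrX.
have q0 : 0 < (4 : R) ^+ B by rewrite exprn_gt0.
rewrite expr_div_n expr1n.
set q := (4 : R) ^+ B in h4 q0 *.
set m := (minn T k)%:R in hm *.
have m0 : 0 <= m by [].
have b0 : 0 < B.+1%:R :> R by [].
have iq : q^-1 * q = 1 by rewrite mulVf // gt_eqF.
have iq0 : 0 < q^-1 by rewrite invr_gt0.
rewrite ler_pdivlMr // mul1r.
set b := B.+1%:R in h4 b0 *.
set iv := q^-1 in iq iq0 *.
have B0 : 0 <= B%:R :> R by [].
have e1 : iv * D / 2 * b <= iv * (B%:R * m) * b.
  apply: ler_wpM2r; [lra|].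
  rewrite -mulrA; apply: ler_wpM2l; [lra|lra].
apply: le_trans e1 _.
have : iv * (B%:R * b) <= iv * q by apply: ler_wpM2l; lra.
rewrite iq => h.
have -> : iv * (B%:R * m) * b = iv * (B%:R * b) * m by ring.
by rewrite -[X in _ <= X]mul1r ler_wpM2r.
Qed.

Lemma log_part (R : realType) (N B k : nat) : (1 <= B <= N)%N ->
  (N < B.+1 ^ k.+1)%N ->
  ln (N%:R : R) - ln (B%:R : R) <= 2 * B%:R * k%:R.
Proof.
move=> /andP[hB hBN] hk.
have lB : 0 <= ln (B%:R : R) by apply: ln_ge0; rewrite ler1n.
have [eNB|ltBN] := eqVneq N B.
  rewrite eNB subrr; apply: mulr_ge0 => //; apply: mulr_ge0 => //.
have k1 : (1 <= k)%N.
  case: k hk => // ; rewrite expn1 ltnS => h.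
  by move: ltBN; rewrite eqn_leq h hBN.
have Np : (0 < N)%N by lia.
have h1 : ln (N%:R : R) <= ln ((B.+1%:R : R) ^+ k.+1).
  rewrite ler_ln ?posrE ?ltr0n ?exprn_gt0 //.
  by rewrite -natrX ler_nat ltnW.
rewrite lnXn // in h1.
have h2 : ln (B.+1%:R : R) <= B%:R.
  by rewrite -addn1 natrD addrC le_ln1Dx //; apply: lt_le_trans (_ : -1 < 0) _ => //; lra.
have h3 : ln (B.+1%:R : R) *+ k.+1 <= B%:R *+ k.+1 by rewrite lerMn2r h2 orbT.
have h4 : (B%:R *+ k.+1 : R) <= 2 * B%:R * k%:R.
  rewrite -mulr_natr -natrM -[2]/(2%:R) -!natrM ler_nat; nia.
lra.
Qed.

Theorem proposition10 (R : realType) :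
  exists c0 C : R, 0 < c0 /\ 0 < C /\
  forall (N B T : nat), (1 <= B <= N)%N ->
    C * (log2 (N%:R : R) - log2 (B%:R : R)) <= T%:R ->
    forall alg : algorithm R N, valid_alg B alg ->
      worst_regret_ge alg T
        (c0 * (1 / 4) ^+ B * (log2 (N%:R : R) - log2 (B%:R : R))).
Proof.
have l2 : 0 < ln (2 : R) by apply: ln_gt0; lra.
exists (ln 2 / 2), (ln 2); split; first by apply: divr_gt0.
split => // N B T hBN hT alg vA eps eps0.
have /andP[hB hN] := hBN.
have Np : (0 < N)%N by lia.
have hb : (1 < B.+1)%N by lia.
have := trunc_log_bounds hb Np; set k := trunc_log _ _ => /andP[kl kh].
have loN := @lo_k_lt R N B k alg kl.
exists (cc R N B k alg); split; first exact: cc_valid.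
exists (Ordinal loN).
have hr := @regret_bound R N B k alg vA (Ordinal loN) erefl T.
set D := ln (N%:R : R) - ln (B%:R : R).
have eD : log2 (N%:R : R) - log2 (B%:R : R) = D / ln 2.
  by rewrite /log2 /D mulrBl.
rewrite eD in hT *.
have hT' : D <= T%:R by move: hT; rewrite mulrC -mulrA mulVf ?gt_eqF // mulr1.
have hk := @log_part R N B k hBN kh.
have := @real_part R B T k D hB hT' hk.
have -> : ln 2 / 2 * (1 / 4) ^+ B * (D / ln 2) = (1 / 4) ^+ B * D / 2.
  by field; rewrite gt_eqF.
move=> h; apply: lt_le_trans hr; apply: lt_le_trans h; lra.
Qed.
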